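(* There exists a topological dynamical system $(X,T)$ which is not thickly sensitive and satisfies $\mathrm{Eq}_{\mathrm{syn}}(X,T)=\varnothing$.
   Context: $(X,\varrho)$ compact metric, $T$ continuous surjection. $S_T(U,\delta)=\{n\in\mathbb{N}:\exists x_1,x_2\in U,\ \varrho(T^nx_1,T^nx_2)>\delta\}$, $J_T(U,\delta)=\mathbb N\setminus S_T(U,\delta)$. Thick: contains arbitrarily long blocks of consecutive integers; syndetic: bounded gaps. Thickly sensitive: there is $\delta>0$ with $S_T(U,\delta)$ thick for all opene $U$. $\mathrm{Eq}_{\mathrm{syn}}(X,T)$: points $x$ such that for every $\varepsilon>0$ some neighborhood $U$ of $x$ has $J_T(U,\varepsilon)$ syndetic. *)

(* Defs.v *)
From Stdlib Require Import Reals.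
Open Scope R_scope.

Definition is_metric {X : Type} (d : X -> X -> R) : Prop :=
  (forall x y, 0 <= d x y) /\
  (forall x y, d x y = 0 <-> x = y) /\
  (forall x y, d x y = d y x) /\
  (forall x y z, d x z <= d x y + d y z).

(* Compactness of a metric space (sequential compactness, equivalent for metric spaces). *)
Definition seq_compact {X : Type} (d : X -> X -> R) : Prop :=
  forall u : nat -> X, exists (phi : nat -> nat) (l : X),
    (forall n m, (n < m)%nat -> (phi n < phi m)%nat) /\
    (forall eps, 0 < eps -> exists N, forall n, (N <= n)%nat -> d (u (phi n)) l < eps).

Definition compact_metric_space {X : Type} (d : X -> X -> R) : Prop :=
  is_metric d /\ seq_compact d.

Definition continuous_map {X : Type} (d : X -> X -> R) (T : X -> X) : Prop :=
  forall x eps, 0 < eps -> exists del, 0 < del /\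
    forall y, d x y < del -> d (T x) (T y) < eps.

Definition surjective_map {X : Type} (T : X -> X) : Prop :=
  forall y, exists x, T x = y.

Definition TDS {X : Type} (d : X -> X -> R) (T : X -> X) : Prop :=
  compact_metric_space d /\ continuous_map d T /\ surjective_map T.

Definition is_open {X : Type} (d : X -> X -> R) (U : X -> Prop) : Prop :=
  forall x, U x -> exists r, 0 < r /\ forall y, d x y < r -> U y.

Definition opene {X : Type} (d : X -> X -> R) (U : X -> Prop) : Prop :=
  is_open d U /\ exists x, U x.

Definition nbhd {X : Type} (d : X -> X -> R) (x : X) (U : X -> Prop) : Prop :=
  exists r, 0 < r /\ forall y, d x y < r -> U y.

Fixpoint iter {X : Type} (T : X -> X) (n : nat) (x : X) : X :=
  match n with
  | O => x
  | S k => T (iter T k x)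
  end.

Definition S_T {X : Type} (d : X -> X -> R) (T : X -> X) (U : X -> Prop) (del : R)
  (n : nat) : Prop :=
  exists x1 x2, U x1 /\ U x2 /\ d (iter T n x1) (iter T n x2) > del.

Definition J_T {X : Type} (d : X -> X -> R) (T : X -> X) (U : X -> Prop) (del : R)
  (n : nat) : Prop := ~ S_T d T U del n.

Definition thick (A : nat -> Prop) : Prop :=
  forall L : nat, exists a : nat, forall i, (i < L)%nat -> A (a + i)%nat.

Definition syndetic (A : nat -> Prop) : Prop :=
  exists L : nat, (0 < L)%nat /\ forall a : nat, exists i, (i < L)%nat /\ A (a + i)%nat.

Definition thickly_sensitive {X : Type} (d : X -> X -> R) (T : X -> X) : Prop :=
  exists del, 0 < del /\ forall U, opene d U -> thick (S_T d T U del).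

Definition Eq_syn {X : Type} (d : X -> X -> R) (T : X -> X) (x : X) : Prop :=
  forall eps, 0 < eps -> exists U, nbhd d x U /\ syndetic (J_T d T U eps).

(* Main.v *)
Require Import Defs.
From Stdlib Require Import Reals.
Open Scope R_scope.
From Stdlib Require Import Lra Lia ZArith ClassicalEpsilon Classical FunctionalExtensionality ProofIrrelevance.

Definition seqb := nat -> bool.

Lemma hp_pos n : 0 < (/2)^n.
Proof. apply pow_lt; lra. Qed.

Lemma hp_le n m : (n <= m)%nat -> (/2)^m <= (/2)^n.
Proof.
  induction 1; [lra|]. simpl. pose proof (hp_pos m). lra.
Qed.

Lemma hp_lt n m : (n < m)%nat -> (/2)^m < (/2)^n.
Proof.
  intro H. apply Rle_lt_trans with ((/2)^(S n)). apply hp_le; lia.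
  simpl. pose proof (hp_pos n). lra.
Qed.

Lemma hp_small eps : 0 < eps -> exists M, (/2)^M < eps.
Proof.
  intro He. destruct (pow_lt_1_zero (/2)) with eps as [N HN]; auto.
  rewrite Rabs_right; lra.
  exists N. specialize (HN N (le_n N)). rewrite Rabs_right in HN; auto.
  apply Rle_ge, Rlt_le, hp_pos.
Qed.

Definition dif (w v : seqb) := exists i, w i <> v i.
Definition least_dif (w v : seqb) n := w n <> v n /\ forall i, (i < n)%nat -> w i = v i.

Lemma least_ex w v : dif w v -> exists n, least_dif w v n.
Proof.
  intros [i Hi]. revert Hi. induction i as [i IH] using (well_founded_induction lt_wf).
  intro Hi. destruct (classic (exists j, (j < i)%nat /\ w j <> v j)) as [[j [Hj1 Hj2]]|Hn].
  - exact (IH j Hj1 Hj2).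
  - exists i. split; auto. intros j Hj. destruct (Bool.bool_dec (w j) (v j)); auto.
    exfalso; apply Hn; eauto.
Qed.

Definition fd (w v : seqb) : nat := epsilon (inhabits 0%nat) (least_dif w v).

Definition d0 (w v : seqb) : R :=
  if excluded_middle_informative (dif w v) then (/2)^(fd w v) else 0.

Lemma least_uniq w v n m : least_dif w v n -> least_dif w v m -> n = m.
Proof.
  intros [H1 H2] [H3 H4]. destruct (Nat.lt_trichotomy n m) as [H|[H|H]]; auto.
  - exfalso; apply H1; auto.
  - exfalso; apply H3; auto.
Qed.

Lemma d0_case w v : (d0 w v = 0 /\ w = v) \/ (exists n, least_dif w v n /\ d0 w v = (/2)^n).
Proof.
  unfold d0. destruct (excluded_middle_informative (dif w v)) as [H|H].
  - right. exists (fd w v). split; auto. unfold fd. apply epsilon_spec, least_ex, H.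
  - left. split; auto. apply functional_extensionality. intro i.
    destruct (Bool.bool_dec (w i) (v i)); auto. exfalso; apply H; exists i; auto.
Qed.

Lemma d0_nonneg w v : 0 <= d0 w v.
Proof. destruct (d0_case w v) as [[H _]|[n [_ H]]]; rewrite H; [lra|apply Rlt_le, hp_pos]. Qed.

Lemma d0_agree w v m : (forall i, (i < m)%nat -> w i = v i) -> d0 w v <= (/2)^m.
Proof.
  intro Ha. destruct (d0_case w v) as [[H _]|[n [[Hn1 Hn2] H]]]; rewrite H.
  - apply Rlt_le, hp_pos.
  - apply hp_le. destruct (le_lt_dec m n); auto. exfalso; apply Hn1; auto.
Qed.

Lemma d0_diff w v i : w i <> v i -> (/2)^i <= d0 w v.
Proof.
  intro Hi. destruct (d0_case w v) as [[H E]|[n [[Hn1 Hn2] H]]].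
  - subst; tauto.
  - rewrite H. apply hp_le. destruct (le_lt_dec n i); auto. exfalso; apply Hi; auto.
Qed.

Lemma d0_sym w v : d0 w v = d0 v w.
Proof.
  destruct (d0_case w v) as [[H E]|[n [[Hn1 Hn2] H]]].
  - subst. reflexivity.
  - destruct (d0_case v w) as [[H' E]|[m [[Hm1 Hm2] H']]].
    + subst. tauto.
    + rewrite H, H'. f_equal. apply (least_uniq w v); split; auto.
      intros i Hi; symmetry; auto.
Qed.

Lemma d0_zero w v : d0 w v = 0 <-> w = v.
Proof.
  destruct (d0_case w v) as [[H E]|[n [[Hn1 Hn2] H]]].
  - tauto.
  - rewrite H. split; intro E. pose proof (hp_pos n); lra. subst; tauto.
Qed.

Lemma d0_tri w v u : d0 w u <= d0 w v + d0 v u.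
Proof.
  pose proof (d0_nonneg w v) as P1. pose proof (d0_nonneg v u) as P2.
  destruct (d0_case w u) as [[H E]|[n [[Hn1 Hn2] H]]].
  - rewrite H; lra.
  - rewrite H. destruct (Bool.bool_dec (w n) (v n)) as [e|e].
    + assert (Q: v n <> u n) by congruence. pose proof (d0_diff v u n Q). lra.
    + pose proof (d0_diff w v n e). lra.
Qed.

Definition Inf (A : nat -> Prop) := forall N, exists n, (N <= n)%nat /\ A n.

Definition chb (u : nat -> seqb) (A : nat -> Prop) (k : nat) : bool :=
  epsilon (inhabits true) (fun b => Inf (fun n => A n /\ u n k = b)).

Fixpoint stage (u : nat -> seqb) (k : nat) : nat -> Prop :=
  match k with
  | O => fun _ => True
  | S k => fun n => stage u k n /\ u n k = chb u (stage u k) k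
  end.

Lemma inf_split (u : nat -> seqb) A k : Inf A -> exists b, Inf (fun n => A n /\ u n k = b).
Proof.
  intro H. apply NNPP. intro Hn.
  assert (H1 : ~ Inf (fun n => A n /\ u n k = true)) by eauto.
  assert (H2 : ~ Inf (fun n => A n /\ u n k = false)) by eauto.
  apply not_all_ex_not in H1. apply not_all_ex_not in H2.
  destruct H1 as [N1 H1]. destruct H2 as [N2 H2].
  destruct (H (N1 + N2)%nat) as [n [Hn1 Hn2]].
  destruct (u n k) eqn:E.
  - apply H1. exists n. split; [lia|auto].
  - apply H2. exists n. split; [lia|auto].
Qed.

Lemma stage_inf u k : Inf (stage u k).
Proof.
  induction k.
  - intro N. exists N. simpl. auto.
  - simpl. unfold chb. apply epsilon_spec. apply inf_split; auto.
Qed.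

Definition lim_s u : seqb := fun i => chb u (stage u i) i.

Lemma stage_agree u k n : stage u k n -> forall i, (i < k)%nat -> u n i = lim_s u i.
Proof.
  revert n; induction k; intros n Hn i Hi. lia.
  simpl in Hn. destruct Hn as [Hn1 Hn2].
  destruct (Nat.eq_dec i k). subst; auto. apply IHk; auto; lia.
Qed.

Definition pick (A : nat -> Prop) (N : nat) : nat :=
  epsilon (inhabits 0%nat) (fun n => (N <= n)%nat /\ A n).

Lemma pick_spec A N : Inf A -> (N <= pick A N)%nat /\ A (pick A N).
Proof. intro H. unfold pick. apply epsilon_spec. apply H. Qed.

Fixpoint phi u (k : nat) : nat :=
  match k with
  | O => pick (stage u 0) 0
  | S k => pick (stage u (S k)) (S (phi u k))
  end.

Lemma phi_stage u k : stage u k (phi u k).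
Proof. destruct k. simpl; trivial. apply (pick_spec (stage u (S k))), stage_inf. Qed.

Lemma phi_S u k : (phi u k < phi u (S k))%nat.
Proof. simpl. apply (pick_spec (stage u (S k)) (S (phi u k))), stage_inf. Qed.

Lemma phi_incr u n m : (n < m)%nat -> (phi u n < phi u m)%nat.
Proof.
  induction 1. apply phi_S. pose proof (phi_S u m). lia.
Qed.

Lemma cantor_seq_compact (u : nat -> seqb) : exists (phi : nat -> nat) (l : seqb),
  (forall n m, (n < m)%nat -> (phi n < phi m)%nat) /\
  (forall n i, (i < n)%nat -> u (phi n) i = l i).
Proof.
  exists (phi u), (lim_s u). split. apply phi_incr.
  intros n i Hi. apply (stage_agree u n); auto. apply phi_stage.
Qed.

Definition P (w : seqb) : Prop := forall N, exists (g : nat) (a : Z), (2 <= g)%nat /\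
  forall i, (i < N)%nat -> w i = true -> (Z.of_nat g | Z.of_nat i - a)%Z.

Definition X := {w : seqb | P w}.
Definition dX (x y : X) : R := d0 (proj1_sig x) (proj1_sig y).
Definition shift (w : seqb) : seqb := fun i => w (S i).

Lemma P_shift w : P w -> P (shift w).
Proof.
  intros H N. destruct (H (S N)) as [g [a [Hg Ha]]]. exists g, (a - 1)%Z. split; auto.
  intros i Hi Hw. specialize (Ha (S i) ltac:(lia) Hw).
  replace (Z.of_nat i - (a - 1))%Z with (Z.of_nat (S i) - a)%Z by lia. auto.
Qed.

Definition TX (x : X) : X := exist _ (shift (proj1_sig x)) (P_shift _ (proj2_sig x)).

Definition cons0 (w : seqb) : seqb := fun i => match i with O => false | S j => w j end.

Lemma P_cons0 w : P w -> P (cons0 w).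
Proof.
  intros H N. destruct (H N) as [g [a [Hg Ha]]]. exists g, (a + 1)%Z. split; auto.
  intros [|i] Hi Hw; simpl in Hw. discriminate.
  specialize (Ha i ltac:(lia) Hw).
  replace (Z.of_nat (S i) - (a + 1))%Z with (Z.of_nat i - a)%Z by lia. auto.
Qed.

Lemma X_eq (x y : X) : proj1_sig x = proj1_sig y -> x = y.
Proof.
  destruct x as [x Hx], y as [y Hy]; simpl; intro E; subst. f_equal. apply proof_irrelevance.
Qed.

Lemma X_compact : compact_metric_space dX.
Proof.
  split.
  - unfold dX. split; [|split; [|split]]; intros.
    + apply d0_nonneg.
    + rewrite d0_zero. split; intro E. apply X_eq; auto. subst; auto.
    + apply d0_sym.
    + apply d0_tri.
  - intro u. destruct (cantor_seq_compact (fun n => proj1_sig (u n))) as [ph [l [H1 H2]]].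
    assert (Pl : P l).
    { intro N. destruct (proj2_sig (u (ph N)) N) as [g [a [Hg Ha]]]. exists g, a. split; auto.
      intros i Hi Hw. apply Ha; auto. rewrite H2; auto. }
    exists ph, (exist _ l Pl). split; auto.
    intros eps He. destruct (hp_small eps He) as [M HM]. exists M. intros n Hn.
    unfold dX; simpl. eapply Rle_lt_trans; [|exact HM]. apply d0_agree.
    intros i Hi. apply H2. lia.
Qed.

Lemma TX_cont : continuous_map dX TX.
Proof.
  intros x eps He. destruct (hp_small eps He) as [M HM]. exists ((/2)^(S M)).
  split. apply hp_pos. intros y Hy. unfold dX in *; simpl.
  eapply Rle_lt_trans; [|exact HM]. apply d0_agree. intros i Hi. unfold shift.
  destruct (Bool.bool_dec (proj1_sig x (S i)) (proj1_sig y (S i))) as [e|e]; auto.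
  exfalso. pose proof (d0_diff _ _ _ e). pose proof (hp_le (S i) (S M) ltac:(lia)). lra.
Qed.

Lemma TX_surj : surjective_map TX.
Proof.
  intro y. exists (exist _ (cons0 (proj1_sig y)) (P_cons0 _ (proj2_sig y))).
  apply X_eq. simpl. reflexivity.
Qed.

Lemma iter_TX k x : proj1_sig (Defs.iter TX k x) = fun i => proj1_sig x (i + k)%nat.
Proof.
  induction k; simpl. apply functional_extensionality; intro i; f_equal; lia.
  rewrite IHk. unfold shift. apply functional_extensionality; intro i; f_equal; lia.
Qed.

Lemma d0_close w v m : d0 w v < (/2)^m -> forall i, (i < m)%nat -> w i = v i.
Proof.
  intros H i Hi. destruct (Bool.bool_dec (w i) (v i)) as [e|e]; auto.
  exfalso. pose proof (d0_diff _ _ _ e). pose proof (hp_le i m ltac:(lia)). lra.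
Qed.

Lemma fact_div d n : (1 <= d <= n)%nat -> (Z.of_nat d | Z.of_nat (fact n))%Z.
Proof.
  induction n; intro H. lia.
  change (fact (S n)) with (S n * fact n)%nat. rewrite Nat2Z.inj_mul.
  destruct (Nat.eq_dec d (S n)). subst. apply Z.divide_factor_l.
  apply Z.divide_mul_r. apply IHn. lia.
Qed.

Lemma not_ts : ~ thickly_sensitive dX TX.
Proof.
  intros [del [Hdel H]]. destruct (hp_small del Hdel) as [L HL].
  set (p := (fact (L + 2) + 1)%nat).
  assert (Hp : (2 <= p)%nat) by (pose proof (lt_O_fact (L+2)); unfold p; lia).
  set (U := fun x : X => proj1_sig x 0%nat = true /\ proj1_sig x p = true).
  assert (HU : opene dX U).
  { split.
    - intros x [Hx0 Hxp]. exists ((/2)^(S p)). split. apply hp_pos.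
      intros y Hy. unfold dX in Hy. pose proof (d0_close _ _ _ Hy) as Ha.
      split; rewrite <- Ha; auto; lia.
    - set (e := fun i => orb (Nat.eqb i 0) (Nat.eqb i p)).
      assert (Pe : P e).
      { intro N. exists p, 0%Z. split; auto. intros i Hi He. unfold e in He.
        apply Bool.orb_true_iff in He. destruct He as [He|He]; apply Nat.eqb_eq in He; subst.
        exists 0%Z. lia. exists 1%Z. lia. }
      exists (exist _ e Pe). unfold U; simpl. unfold e. rewrite Nat.eqb_refl.
      split; auto. rewrite Nat.eqb_refl. apply Bool.orb_true_r. }
  destruct (H U HU (p + 2)%nat) as [a0 Ha0].
  set (q := (a0 / p)%nat). set (r := (a0 mod p)%nat).
  assert (Ea : a0 = (p * q + r)%nat) by (apply Nat.div_mod; lia).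
  assert (Hr : (r < p)%nat) by (apply Nat.mod_upper_bound; lia).
  set (k := ((q + 1) * p + 1)%nat).
  assert (Hk : forall x : X, U x -> forall i, (i < L)%nat -> proj1_sig x (i + k)%nat = false).
  { intros x [Hx0 Hxp] i Hi. destruct (proj1_sig x (i + k)%nat) eqn:E; auto. exfalso.
    destruct (proj2_sig x (i + k + p + 1)%nat) as [g [a [Hg Hga]]].
    pose proof (Hga 0%nat ltac:(lia) Hx0) as D0.
    pose proof (Hga p ltac:(lia) Hxp) as Dp.
    pose proof (Hga (i + k)%nat ltac:(lia) E) as Dk.
    assert (Gp : (Z.of_nat g | Z.of_nat p)%Z).
    { replace (Z.of_nat p) with ((Z.of_nat p - a) - (Z.of_nat 0 - a))%Z by lia.
      apply Z.divide_sub_r; auto. }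
    assert (Gk : (Z.of_nat g | Z.of_nat (i + k))%Z).
    { replace (Z.of_nat (i + k)) with ((Z.of_nat (i + k) - a) - (Z.of_nat 0 - a))%Z by lia.
      apply Z.divide_sub_r; auto. }
    assert (Gi : (Z.of_nat g | Z.of_nat (1 + i))%Z).
    { replace (Z.of_nat (1 + i)) with (Z.of_nat (i + k) - Z.of_nat (q + 1) * Z.of_nat p)%Z
        by (unfold k; lia).
      apply Z.divide_sub_r; auto. apply Z.divide_mul_r; auto. }
    apply Z.divide_pos_le in Gi; [|lia].
    assert (Gf : (Z.of_nat g | Z.of_nat (fact (L + 2)))%Z) by (apply fact_div; lia).
    assert (G1 : (Z.of_nat g | 1)%Z).
    { replace 1%Z with (Z.of_nat p - Z.of_nat (fact (L + 2)))%Z by (unfold p; lia).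
      apply Z.divide_sub_r; auto. }
    apply Z.divide_1_r in G1. lia. }
  destruct (Ha0 (k - a0)%nat ltac:(unfold k; nia)) as [x1 [x2 [Hx1 [Hx2 Hd]]]].
  replace (a0 + (k - a0))%nat with k in Hd by (unfold k; nia).
  unfold dX in Hd. rewrite !iter_TX in Hd.
  assert (d0 (fun i => proj1_sig x1 (i + k)%nat) (fun i => proj1_sig x2 (i + k)%nat) <= (/2)^L).
  { apply d0_agree. intros i Hi. rewrite !Hk; auto. }
  lra.
Qed.

Lemma w_struct w : P w -> exists (a : Z) (G : nat), (1 <= G)%nat /\ forall N, exists g : nat,
  (2 <= g)%nat /\ (Z.of_nat g | Z.of_nat G)%Z /\
  forall i, (i < N)%nat -> w i = true -> (Z.of_nat g | Z.of_nat i - a)%Z.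
Proof.
  intro Hw.
  destruct (classic (exists i0 j0, (i0 < j0)%nat /\ w i0 = true /\ w j0 = true))
    as [[i0 [j0 [Hij [Hi0 Hj0]]]]|Hno].
  - exists (Z.of_nat i0), (j0 - i0)%nat. split. lia. intro N.
    destruct (Hw (N + j0 + 1)%nat) as [g [a' [Hg Ha]]]. exists g. split; auto.
    pose proof (Ha i0 ltac:(lia) Hi0). pose proof (Ha j0 ltac:(lia) Hj0). split.
    + replace (Z.of_nat (j0 - i0)) with ((Z.of_nat j0 - a') - (Z.of_nat i0 - a'))%Z by lia.
      apply Z.divide_sub_r; auto.
    + intros i Hi Hwi. pose proof (Ha i ltac:(lia) Hwi).
      replace (Z.of_nat i - Z.of_nat i0)%Z with ((Z.of_nat i - a') - (Z.of_nat i0 - a'))%Z by lia.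
      apply Z.divide_sub_r; auto.
  - destruct (classic (exists i0, w i0 = true)) as [[i0 Hi0]|Hn].
    + exists (Z.of_nat i0), 2%nat. split. lia. intro N. exists 2%nat. split. lia.
      split. apply Z.divide_refl. intros i Hi Hwi.
      assert (i = i0).
      { destruct (Nat.lt_trichotomy i i0) as [h|[h|h]]; auto; exfalso; apply Hno; eauto. }
      subst. exists 0%Z. lia.
    + exists 0%Z, 2%nat. split. lia. intro N. exists 2%nat. split. lia.
      split. apply Z.divide_refl. intros i Hi Hwi. exfalso; eauto.
Qed.

Lemma not_eq x : ~ Eq_syn dX TX x.
Proof.
  intro H. destruct x as [w Hw]. destruct (w_struct w Hw) as [a [G [HG HS]]].
  destruct (H ((/2)^G) (hp_pos G)) as [U [[r [Hr HU]] [L [HL Hsyn]]]].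
  destruct (hp_small r Hr) as [m Hm].
  set (x1 := fun i => if Nat.ltb i m then w i else false).
  set (x2 := fun i => if Nat.ltb i m then w i
                      else Z.eqb ((Z.of_nat i - a) mod Z.of_nat G)%Z 0%Z).
  assert (P1 : P x1).
  { intro N. destruct (Hw N) as [g [a' [Hg Ha]]]. exists g, a'. split; auto.
    intros i Hi Hx. apply Ha; auto. unfold x1 in Hx. destruct (Nat.ltb i m); auto; discriminate. }
  assert (P2 : P x2).
  { intro N. destruct (HS N) as [g [Hg [HgG Ha]]]. exists g, a. split; auto.
    intros i Hi Hx. unfold x2 in Hx. destruct (Nat.ltb i m); auto.
    apply Z.eqb_eq in Hx. apply Z.mod_divide in Hx; [|lia].
    eapply Z.divide_trans; eauto. }
  assert (InU : forall v (Pv : P v), (forall i, (i < m)%nat -> v i = w i) -> U (exist _ v Pv)).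
  { intros v Pv Hv. apply HU. unfold dX; simpl. eapply Rle_lt_trans; [|exact Hm].
    apply d0_agree. intros i Hi. symmetry; auto. }
  assert (U1 : U (exist _ x1 P1)).
  { apply InU. intros i Hi. unfold x1. apply Nat.ltb_lt in Hi. rewrite Hi. auto. }
  assert (U2 : U (exist _ x2 P2)).
  { apply InU. intros i Hi. unfold x2. apply Nat.ltb_lt in Hi. rewrite Hi. auto. }
  destruct (Hsyn m) as [i [Hi HJ]]. apply HJ. clear HJ.
  set (k := (m + i)%nat).
  exists (exist _ x1 P1), (exist _ x2 P2). split; auto. split; auto.
  unfold dX. rewrite !iter_TX. simpl.
  set (t := Z.to_nat ((a - Z.of_nat k) mod Z.of_nat G)).
  assert (Ht : (0 <= (a - Z.of_nat k) mod Z.of_nat G < Z.of_nat G)%Z) by (apply Z.mod_pos_bound; lia).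
  assert (Et : Z.of_nat t = ((a - Z.of_nat k) mod Z.of_nat G)%Z) by (unfold t; rewrite Z2Nat.id; lia).
  assert (HtG : (t < G)%nat) by lia.
  assert (Diff : x1 (t + k)%nat <> x2 (t + k)%nat).
  { unfold x1, x2. assert (Hl : Nat.ltb (t + k) m = false) by (apply Nat.ltb_ge; unfold k; lia).
    rewrite Hl. intro E. symmetry in E. apply Z.eqb_neq in E. apply E.
    apply Z.mod_divide; [lia|].
    exists (- ((a - Z.of_nat k) / Z.of_nat G))%Z.
    pose proof (Z.div_mod (a - Z.of_nat k) (Z.of_nat G) ltac:(lia)).
    rewrite Nat2Z.inj_add, Et. lia. }
  pose proof (d0_diff (fun i0 => x1 (i0 + k)%nat) (fun i0 => x2 (i0 + k)%nat) t Diff).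
  pose proof (hp_lt t G HtG). apply Rlt_gt. lra.
Qed.

Theorem mainTheorem5 :
  exists (X : Type) (d : X -> X -> R) (T : X -> X),
    inhabited X /\ TDS d T /\
    ~ thickly_sensitive d T /\
    (forall x : X, ~ Eq_syn d T x).
Proof.
  exists X, dX, TX. split.
  - assert (P0 : P (fun _ => false)).
    { intro N. exists 2%nat, 0%Z. split. lia. intros; discriminate. }
    exact (inhabits (exist _ _ P0)).
  - split. split. apply X_compact. split. apply TX_cont. apply TX_surj.
    split. apply not_ts. apply not_eq.
Qed.
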